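(* Consider a sequence of probability distributions $\{Q^k(x,E,\theta):E\in\mathcal{E},x\in\mathcal{X}_E,\theta\in\{\theta_0,\theta_1\}\}_{k\ge1}$ satisfying the low-informativeness condition; in particular $Q^k(x,E,\theta)\to\mathcal{Q}(x,E)$ for $\theta=\theta_0,\theta_1$. For each $k$, let $\mathcal{Q}^k(\cdot,E)$ be the corresponding solution of $$\min_{\mathcal{Q}'\ge0}\ \max_{\theta\in\{\theta_0,\theta_1\}}\ \max_{x\in\mathcal{X}_E}\Big|\frac{Q^k(x,E,\theta)}{\mathcal{Q}'(x,E)}-1\Big|\quad\text{subject to}\quad\sum_{x\in\mathcal{X}_E}\mathcal{Q}'(x,E)=1$$ for every $E\in\mathcal{E}$. Then $\mathcal{Q}^k(x,E)\to\mathcal{Q}(x,E)$ as $k\to\infty$ for all $E\in\mathcal{E}$ and $x\in\mathcal{X}_E$.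
   Context: $\mathcal{E}$ is a finite set of experiments, each $E$ with a finite outcome set $\mathcal{X}_E$. For each $k$, $Q^k(\cdot,E,\theta)$ is a probability distribution on $\mathcal{X}_E$ (outcome probabilities under $\Theta=\theta$). Low-informativeness condition: for each $E\in\mathcal{E}$ there is a probability distribution $\mathcal{Q}(\cdot,E)$ on $\mathcal{X}_E$ such that, for $\theta\in\{\theta_0,\theta_1\}$, $\sqrt{k}\big(Q^k(x,E,\theta)/\mathcal{Q}(x,E)-1\big)\to\alpha(x,E,\theta)$ with $\sum_x\alpha(x,E,\theta)\mathcal{Q}(x,E)=0$. *)

(* Defs.v *)
From HB Require Import structures.
From mathcomp Require Import all_boot all_order all_algebra.
From mathcomp Require Import all_classical all_reals all_analysis.
Set Implicit Arguments. Unset Strict Implicit. Unset Printing Implicit Defensive.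
Import Order.TTheory GRing.Theory Num.Theory.
Local Open Scope ring_scope.

Definition is_distr (R : realType) (T : finType) (p : T -> R) : Prop :=
  (forall x, 0 <= p x) /\ \sum_(x : T) p x = 1.

(* |q / q' - 1| as an extended real; the ratio is undefined (taken as +oo)
   when q' = 0. *)
Definition ratio_dev (R : realType) (q q' : R) : \bar R :=
  if 0 < q' then (`| q / q' - 1 |)%:E else +oo%E.

(* Objective of the minimisation problem for one experiment:
   max_{theta in {theta0,theta1}} max_{x} |Q(x,theta)/Q'(x) - 1|.
   theta0 ~ false, theta1 ~ true. *)
Definition lowinf_obj (R : realType) (T : finType) (Q : T -> bool -> R)
    (Q' : T -> R) : \bar R :=
  \big[Order.max/-oo%E]_(th : bool) \big[Order.max/-oo%E]_(x : T)
     ratio_dev (Q x th) (Q' x).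

(* Main.v *)
Require Import Defs.
From HB Require Import structures.
From mathcomp Require Import all_boot all_order all_algebra.
From mathcomp Require Import all_classical all_reals all_analysis.
Import Order.TTheory GRing.Theory Num.Theory.
Import numFieldNormedType.Exports.
Local Open Scope classical_set_scope.
Local Open Scope ring_scope.

Lemma keyL (R : realType) (g : nat -> R) (a e : R) :
  (fun k : nat => Num.sqrt (k%:R) * g k) @ \oo --> a -> 0 < e ->
  \forall k \near \oo, `|g k| <= e.
Proof.
move=> /cvgrPdist_le H e0.
have [N _ HN] := H 1 ltr01.
set M := `|a| + 1.
have M0 : 0 < M by rewrite /M ltr_wpDl.
exists (maxn N (Num.truncn ((M / e) ^+ 2)).+1) => // k /=.
rewrite geq_max => /andP [/HN /= Hk Hk2].
have Hf : `|Num.sqrt k%:R * g k| <= M.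
  have -> : Num.sqrt k%:R * g k = a - (a - Num.sqrt k%:R * g k) by rewrite subKr.
  by apply: le_trans (ler_normB _ _) _; rewrite lerD2l.
have Hlt : M / e < Num.sqrt k%:R.
  have h1 : (M / e) ^+ 2 < k%:R.
    apply: lt_le_trans (truncnS_gt _) _; by rewrite ler_nat.
  have kp := (le_lt_trans (exprn_ge0 2 (ltW (divr_gt0 M0 e0))) h1).
  rewrite -ltr_sqrt // in h1.
  by rewrite sqrtr_sqr gtr0_norm ?divr_gt0 in h1.
have s0 : 0 < Num.sqrt (k%:R : R) by apply: (lt_trans _ Hlt); rewrite divr_gt0.
rewrite normrM (gtr0_norm s0) in Hf.
rewrite -(ler_pM2l s0); apply: le_trans Hf _.
rewrite ltr_pdivrMr // in Hlt.
exact: ltW.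
Qed.

Lemma distr_le1 (R : realType) (T : finType) (p : T -> R) :
  is_distr p -> forall x, p x <= 1.
Proof.
case=> h0 h1 x; rewrite -h1 (bigD1 x) //= lerDl sumr_ge0 //.
Qed.

Lemma dev_bound (R : realType) (a b d : R) :
  0 < b -> b <= 1 -> `|a / b - 1| <= d -> `|a - b| <= d.
Proof.
move=> b0 b1 h.
have -> : a - b = b * (a / b - 1).
  by rewrite mulrBr mulr1 [b * _]mulrC -mulrA mulVf ?gt_eqF // mulr1.
rewrite normrM gtr0_norm // -[d]mul1r.
apply: ler_pM => //; exact: ltW.
Qed.
Arguments dev_bound {R a b d}.
Arguments distr_le1 {R T p}.

Theorem proposition8 (R : realType) (Exp : finType) (X : Exp -> finType)
    (Q : nat -> forall E : Exp, X E -> bool -> R)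
    (calQ : forall E : Exp, X E -> R)
    (alpha : forall E : Exp, X E -> bool -> R)
    (calQk : nat -> forall E : Exp, X E -> R) :
  (* each Q^k(., E, theta) is a probability distribution on X_E *)
  (forall k E th, (0 < k)%N -> is_distr (fun x => Q k E x th)) ->
  (* low-informativeness condition *)
  (forall E, is_distr (calQ E)) ->
  (forall E x th,
     (fun k : nat => Num.sqrt (k%:R) * (Q k E x th / calQ E x - 1))
       @ \oo --> alpha E x th) ->
  (forall E th, \sum_(x : X E) alpha E x th * calQ E x = 0) ->
  (* calQ^k(., E) solves the minimisation problem for each k >= 1 and E *)
  (forall k E, (0 < k)%N ->
     is_distr (calQk k E) /\
     forall Q' : X E -> R, is_distr Q' ->
       (lowinf_obj (Q k E) (calQk k E) <= lowinf_obj (Q k E) Q')%E) ->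
  forall E x, (fun k : nat => calQk k E x) @ \oo --> calQ E x.
Proof.
move=> HQ HcQ Hf Ha Hopt.
have L : forall E x th e, 0 < e ->
    \forall k \near \oo, `|Q k E x th / calQ E x - 1| <= e.
  by move=> E x th e e0; exact: keyL (Hf E x th) e0.
have pos : forall E x, 0 < calQ E x.
  move=> E x; have [h0 _] := HcQ E.
  rewrite lt_neqAle h0 andbT; apply/negP => /eqP h.
  have h2 : (0 : R) < 1 / 2 by rewrite divr_gt0.
  have [k Hk] := filter_ex (L E x false (1/2) h2).
  move: Hk; rewrite -h invr0 mulr0 sub0r normrN.
  by rewrite normr1 ler_pdivlMr // mul1r leNgt ltr1n.
move=> E x.
apply/cvgrPdist_le => e e0.
have e20 : 0 < e / 2 by rewrite divr_gt0.
have H1 : \forall k \near \oo, forall p : bool * X E,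
    `|Q k E p.2 p.1 / calQ E p.2 - 1| <= e / 2.
  by apply: filter_forall => p; exact: L.
have Hk0 : \forall k \near \oo, (0 < k)%N by exists 1%N.
near=> k.
have Hk : (0 < k)%N by near: k; exact: Hk0.
have Hp : forall p : bool * X E, `|Q k E p.2 p.1 / calQ E p.2 - 1| <= e / 2.
  by near: k; exact: H1.
have [Hd Hmin] := Hopt k E Hk.
have Hobj : (lowinf_obj (Q k E) (calQ E) <= (e / 2)%:E)%E.
  apply: bigmax_le => [|th _]; first exact: leNye.
  apply: bigmax_le => [|y _]; first exact: leNye.
  by rewrite /ratio_dev pos lee_fin; exact: (Hp (th, y)).
have Hle := le_trans (Hmin _ (HcQ E)) Hobj.
have Hr : (ratio_dev (Q k E x false) (calQk k E x) <= (e / 2)%:E)%E.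
  apply: le_trans Hle.
  apply: le_trans (le_bigmax _ _ false).
  exact: (le_bigmax _ (fun y => ratio_dev (Q k E y false) (calQk k E y)) x).
move: Hr; rewrite /ratio_dev; case: ifP => qp; last by [].
rewrite lee_fin => Hr.
have A := dev_bound qp (distr_le1 Hd x) Hr.
have B := dev_bound (pos E x) (distr_le1 (HcQ E) x) (Hp (false, x)).
rewrite /= in B.
apply: le_trans (ler_distD (Q k E x false) _ _) _.
rewrite [X in X + _]distrC (splitr e); exact: lerD.
Unshelve. all: by end_near.
Qed.
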